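(* In the curved-exam game described in the context, let $\hat\alpha_n:=n\big(1-(\sum_{i=1}^n\frac1{n-\alpha_i})^{-1}\big)$, $\bar x^*:=1-\frac{nm}{n-1}\big(\frac1{\hat\alpha_n}-1\big)$, and $x_i^*:=\frac{(n-1)\alpha_i-n(1-\alpha_i)(m-\bar x^* )}{n-\alpha_i}$ for $i=1,\dots,n$. Then the profile $x^*=(x_1^*,\dots,x_n^* )$ is a curved interior pure Nash equilibrium (all $x_i^*>0$) if and only if $$\max_{1\le i\le n}\Big\{(n-\alpha_i)\Big(\frac{nm}{n-1}-J_i\Big)-\alpha_i\Big\}\ \le\ n(m-\bar x^* )\ <\ \frac{(n-1)\alpha_{(1)}}{1-\alpha_{(1)}},$$ where $\alpha_{(1)}:=\min_{1\le i\le n}\alpha_i$.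
   Context: The curved-exam game: fix $n\ge2$, abilities $\alpha_1,\dots,\alpha_n\in(0,1)$, target mean $m\in(0,1)$. Student $i$ chooses $x_i\in[0,1]$; $\bar x=\frac1n\sum_j x_j$, $\bar x_{-i}=\frac1{n-1}\sum_{j\ne i}x_j$. Grade $G_i(x)=x_i+\max(m-\bar x,0)$ (not truncated at 1); payoff $U_i(x)=G_i(x)^{\alpha_i}(1-x_i)^{1-\alpha_i}$. For each $i$, $J_i$ denotes the unique zero in $\big[\frac{nm-\alpha_i}{n-1},\frac{nm}{n-1}-\frac{\alpha_i}{n-\alpha_i}\big]$ of the strictly decreasing function $\phi_i(z)=\big(m+\frac{n-1}{n}(1-z)\big)^{\alpha_i}\big(1+\frac{nm}{n-1}-z\big)^{1-\alpha_i}-1$. *)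

(* Defs.v *)
From mathcomp Require Import all_boot all_order all_algebra.
From mathcomp Require Import reals exp.
Set Implicit Arguments. Unset Strict Implicit. Unset Printing Implicit Defensive.
Import Order.TTheory GRing.Theory Num.Theory.
Local Open Scope ring_scope.

Section CurvedExam.
Variables (R : realType) (n : nat).

Definition xbar (x : 'I_n -> R) : R := (\sum_(j < n) x j) / n%:R.

Definition grade (m : R) (x : 'I_n -> R) (i : 'I_n) : R :=
  x i + Num.max (m - xbar x) 0.

Definition payoff (a : 'I_n -> R) (m : R) (x : 'I_n -> R) (i : 'I_n) : R :=
  (grade m x i) `^ (a i) * (1 - x i) `^ (1 - a i).

Definition upd (x : 'I_n -> R) (i : 'I_n) (y : R) : 'I_n -> R :=
  fun j => if j == i then y else x j.

Definition is_profile (x : 'I_n -> R) : Prop := forall i, 0 <= x i <= 1.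

Definition is_pure_NE (a : 'I_n -> R) (m : R) (x : 'I_n -> R) : Prop :=
  is_profile x /\
  forall (i : 'I_n) (y : R), 0 <= y <= 1 -> payoff a m (upd x i y) i <= payoff a m x i.

(* curved (the curve is active: \bar x < m) interior (all x_i > 0) pure NE *)
Definition curved_interior_pure_NE (a : 'I_n -> R) (m : R) (x : 'I_n -> R) : Prop :=
  is_pure_NE a m x /\ (forall i, 0 < x i) /\ xbar x < m.

Definition phi (m ai z : R) : R :=
  (m + (n%:R - 1) / n%:R * (1 - z)) `^ ai *
  (1 + n%:R * m / (n%:R - 1) - z) `^ (1 - ai) - 1.

Definition alpha_hat (a : 'I_n -> R) : R :=
  n%:R * (1 - (\sum_(i < n) (n%:R - a i)^-1)^-1).

Definition xbar_star (a : 'I_n -> R) (m : R) : R :=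
  1 - n%:R * m / (n%:R - 1) * ((alpha_hat a)^-1 - 1).

Definition x_star (a : 'I_n -> R) (m : R) (i : 'I_n) : R :=
  ((n%:R - 1) * a i - n%:R * (1 - a i) * (m - xbar_star a m)) / (n%:R - a i).

End CurvedExam.

Definition maxs {R : realType} (s : seq R) : R := foldr Num.max (head 0 s) s.
Definition mins {R : realType} (s : seq R) : R := foldr Num.min (head 0 s) s.

(* Main.v *)
Require Import Defs.
From mathcomp Require Import all_boot all_order all_algebra.
From mathcomp Require Import reals exp ring lra.
Import Order.TTheory GRing.Theory Num.Theory.
Local Open Scope ring_scope.


Section AMGM.
Variables (R : realType) (al : R).
Hypothesis hal : 0 < al < 1.

Lemma ln_lt_sub1 (u : R) : 0 < u -> u != 1 -> ln u < u - 1.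
Proof.
move=> u0 u1.
have h : ln u != 0 by rewrite ln_eq0.
have := expR_gt1Dx h; rewrite lnK ?posrE //; lra.
Qed.

Lemma ln_le_sub1 (u : R) : 0 < u -> ln u <= u - 1.
Proof.
move=> u0; have [->|u1] := eqVneq u 1; first by rewrite ln1; lra.
exact/ltW/ln_lt_sub1.
Qed.

Lemma amgm_strict (x y : R) : 0 < x -> 0 < y -> x != y ->
  x `^ al * y `^ (1 - al) < al * x + (1 - al) * y.
Proof.
move=> x0 y0 xy.
case/andP: hal => a0 a1.
set L := al * x + (1 - al) * y.
have L0 : 0 < L by rewrite /L; nra.
rewrite /powR (gt_eqF x0) (gt_eqF y0) -expRD.
rewrite -[X in _ < X](lnK (x:=L)) ?posrE // ltr_expR.
have xL : x / L != 1.
  apply/negP => /eqP e.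
  have e' : x = L by apply: divr1_eq e.
  move: e'; rewrite /L => e'.
  have : (1 - al) * (x - y) = 0 by lra.
  move/eqP; rewrite mulf_eq0 => /orP[/eqP|]; [lra|by rewrite subr_eq0 (negbTE xy)].
have h1 := @ln_lt_sub1 (x / L) (divr_gt0 x0 L0) xL.
have h2 := @ln_le_sub1 (y / L) (divr_gt0 y0 L0).
rewrite !ln_div ?posrE // in h1 h2.
have e : al * (x / L - 1) + (1 - al) * (y / L - 1) = 0.
  rewrite /L; field; exact: lt0r_neq0 L0.
nra.
Qed.

Lemma amgm (x y : R) : 0 <= x -> 0 <= y ->
  x `^ al * y `^ (1 - al) <= al * x + (1 - al) * y.
Proof.
move=> x0 y0; case/andP: hal => a0 a1.
have [->|xn0] := eqVneq x 0.
  rewrite powR0 ?mul0r; [nra|exact: lt0r_neq0].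
have [->|yn0] := eqVneq y 0.
  rewrite powR0 ?mulr0; [nra|]. by apply/eqP; lra.
have [<-|xy] := eqVneq x y.
  rewrite -powRD; last by apply/implyP => /eqP; lra.
  rewrite addrC subrK powRr1 //; lra.
apply/ltW/amgm_strict => //; rewrite lt_def ?xn0 ?yn0 //.
Qed.

Lemma amgm2 (p q P Q : R) : 0 <= p -> 0 <= q -> 0 < P -> 0 < Q ->
  p `^ al * q `^ (1 - al) <=
  (al * (p / P) + (1 - al) * (q / Q)) * (P `^ al * Q `^ (1 - al)).
Proof.
move=> p0 q0 P0 Q0.
have -> : p `^ al = (p / P) `^ al * P `^ al.
  by rewrite -powRM ?(divr_ge0 p0 (ltW P0)) ?(ltW P0) // divfK // lt0r_neq0.
have -> : q `^ (1 - al) = (q / Q) `^ (1 - al) * Q `^ (1 - al).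
  by rewrite -powRM ?(divr_ge0 q0 (ltW Q0)) ?(ltW Q0) // divfK // lt0r_neq0.
rewrite mulrACA ler_wpM2r ?mulr_ge0 ?powR_ge0 //.
by apply: amgm; [exact: divr_ge0 p0 (ltW P0)|exact: divr_ge0 q0 (ltW Q0)].
Qed.

End AMGM.

Lemma player (R : realType) (n : nat) (m al D xi J : R) :
 (2 <= n)%N -> 0 < al < 1 -> 0 < m -> 0 < D ->
 xi * (n%:R - al) = (n%:R - 1) * al - n%:R * (1 - al) * D ->
 (n%:R * m - al) / (n%:R - 1) <= J <= n%:R * m / (n%:R - 1) - al / (n%:R - al) ->
 phi n m al J = 0 ->
 (forall y, 0 <= y <= 1 ->
    (y + Num.max (D - (y - xi) / n%:R) 0) `^ al * (1 - y) `^ (1 - al)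
    <= (xi + D) `^ al * (1 - xi) `^ (1 - al))
 <-> (n%:R - al) * (n%:R * m / (n%:R - 1) - J) - al <= n%:R * D.
Proof.
move=> n2 /andP[a0 a1] m0 D0 xiE0 /andP[Jlo Jhi] phJ.
rewrite /phi in phJ.
set N := n%:R in xiE0 Jlo Jhi phJ *.
have N2 : 2 <= N by rewrite /N (ler_nat R 2 n).
set c := N - 1 in xiE0 Jlo Jhi phJ *.
have c0 : 0 < c by rewrite /c; lra.
have N0 : 0 < N by lra.
have Na : 0 < N - al by lra.
have xiE : xi = (c * al - N * (1 - al) * D) / (N - al).
  by rewrite -xiE0 mulfK // lt0r_neq0.
set KS := N * (1 + D) / (N - al).
set KJ := 1 + N * m / c - J.
pose h K := (c / N * K) `^ al * K `^ (1 - al).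
pose A := al `^ al * (1 - al) `^ (1 - al).
have A0 : 0 < A by rewrite /A mulr_gt0 // powR_gt0 //; lra.
have KS0 : 0 < KS by rewrite /KS divr_gt0 //; nra.
have KJlo : al / (N - al) <= KJ - 1 by rewrite /KJ; lra.
have KJ0 : 0 < KJ by have := divr_gt0 a0 Na; lra.
have hKJ : h KJ = 1.
  have e1 : m + c / N * (1 - J) = c / N * KJ.
    rewrite /KJ; field; apply/andP; split; exact: lt0r_neq0.
  rewrite /h -e1 /KJ; lra.
have mono : forall K1 K2, 0 < K1 -> K1 < K2 -> h K1 < h K2.
  move=> K1 K2 K10 K12; rewrite /h; apply: ltr_pM; rewrite ?powR_ge0 //.
    have cN0 : 0 < c / N by exact: divr_gt0.
    apply: gt0_ltr_powR => //; rewrite ?nnegrE.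
    - exact/ltW/mulr_gt0.
    - apply/ltW/mulr_gt0 => //; lra.
    - by rewrite ltr_pM2l.
  apply: gt0_ltr_powR => //; rewrite ?nnegrE; lra.
have monow : forall K1 K2, 0 < K1 -> K1 <= K2 -> h K1 <= h K2.
  move=> K1 K2 K10; rewrite le_eqVlt => /orP[/eqP->//|K12].
  exact/ltW/mono.
have ePS : xi + D = al * (c / N * KS).
  rewrite xiE /KS /c; field; rewrite ?lt0r_neq0 //.
have eQS : 1 - xi = (1 - al) * KS.
  rewrite xiE /KS /c; field; rewrite ?lt0r_neq0 //.
have payS : (xi + D) `^ al * (1 - xi) `^ (1 - al) = A * h KS.
  have cN0 : 0 < c / N by exact: divr_gt0.
  rewrite ePS eQS (@powRM _ al (c / N * KS) al) ?(@powRM _ (1 - al) KS (1 - al));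
    try (apply/ltW; first [exact: mulr_gt0 | exact: KS0 | exact: a0 | lra]).
  by rewrite /A /h; ring.
have condE : ((N - al) * (N * m / c - J) - al <= N * D) = (KJ <= KS).
  rewrite /KS ler_pdivlMr // /KJ.
  apply/idP/idP => H; nra.
rewrite condE; split.
- move=> H; rewrite leNgt; apply/negP => KSJ.
  have KJle : KJ <= 1 + al / c.
    rewrite /KJ; move: Jlo; rewrite mulrBl => Jlo; lra.
  have e3 : N * D + xi = c * (KS - 1).
    rewrite xiE /KS /c; field; rewrite ?lt0r_neq0 //.
  have t0 : D - (al - xi) / N <= 0.
    have : c * (KS - 1) < al.
      have : KS - 1 < al / c by lra.
      by rewrite ltr_pdivlMr // mulrC.
    rewrite -e3 => h3.
    have : (al - xi) / N >= D.
      by rewrite ler_pdivlMr //; lra.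
    lra.
  have := H al; rewrite max_r // addr0 -/A payS.
  have : h KS < 1 by rewrite -hKJ; exact: mono.
  move=> hlt Hle.
  have : A * h KS < A * 1 by rewrite ltr_pM2l.
  have : A <= A * h KS by apply: Hle; lra.
  lra.
- move=> KJS y /andP[y0 y1].
  have hal : 0 < al < 1 by rewrite a0 a1.
  have h1 : 1 <= h KS by rewrite -hKJ; exact: monow.
  rewrite payS.
  have [t0|t0] := lerP (D - (y - xi) / N) 0.
    rewrite ?addr0.
    apply: (le_trans (@amgm2 R al hal _ _ al (1 - al) _ _ _ _)) => //; try lra.
    have -> : al * (y / al) + (1 - al) * ((1 - y) / (1 - al)) = 1.
      field; apply/andP; split; apply/lt0r_neq0; lra.
    rewrite mul1r -/A; rewrite -[X in X <= _]mulr1 ler_pM2l //.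
  idtac.
  apply: (le_trans (@amgm2 R al hal _ _ (xi + D) (1 - xi) _ _ _ _)) => //; try lra.
  + rewrite ePS; apply: mulr_gt0 => //; apply: mulr_gt0 => //; exact: divr_gt0.
  + rewrite eQS; apply: mulr_gt0 => //; lra.
  have -> : al * ((y + (D - (y - xi) / N)) / (xi + D)) +
      (1 - al) * ((1 - y) / (1 - xi)) = 1.
    rewrite ePS eQS xiE /KS /c; field.
    by rewrite -/N !lt0r_neq0 //; lra.
  by rewrite mul1r -payS.
Qed.

Lemma term_pos (R : realType) (n : nat) (m al J : R) :
 (2 <= n)%N -> 0 < al < 1 ->
 J <= n%:R * m / (n%:R - 1) - al / (n%:R - al) ->
 phi n m al J = 0 ->
 0 < (n%:R - al) * (n%:R * m / (n%:R - 1) - J) - al.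
Proof.
move=> n2 hal Jhi phJ; move: (hal) => /andP[a0 a1].
rewrite /phi in phJ.
set N := n%:R in Jhi phJ *.
have N2 : 2 <= N by rewrite /N (ler_nat R 2 n).
have c0 : 0 < N - 1 by lra.
have Na : 0 < N - al by lra.
rewrite ltNge; apply/negP => H.
have hw : N * m / (N - 1) - J <= al / (N - al).
  by rewrite ler_pdivlMr // mulrC; lra.
have hJ : J = N * m / (N - 1) - al / (N - al) by lra.
have e1 : m + (N - 1) / N * (1 - J) = (N - 1) / (N - al).
  rewrite hJ; field; rewrite !lt0r_neq0 //; lra.
have e2 : 1 + N * m / (N - 1) - J = N / (N - al).
  rewrite hJ; field; rewrite !lt0r_neq0 //; lra.
rewrite e1 e2 in phJ.
have : (N - 1) / (N - al) != N / (N - al).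
  apply/negP => /eqP e.
  have : N - 1 = N by move: e => /(congr1 (fun x => x * (N - al))); rewrite !divfK ?lt0r_neq0.
  lra.
move=> /(@amgm_strict R al hal _ _ (divr_gt0 c0 Na) (divr_gt0 (lt_trans ltr01 (lt_le_trans (ltr_nat R 1 2) N2)) Na)).
have -> : al * ((N - 1) / (N - al)) + (1 - al) * (N / (N - al)) = 1.
  field; exact: lt0r_neq0.
lra.
Qed.

Lemma xbar_upd (R : realType) (n : nat) (x : 'I_n -> R) (i : 'I_n) (y : R) :
  xbar (upd x i y) = xbar x + (y - x i) / n%:R.
Proof.
rewrite /xbar (bigD1 i) //= [in RHS](bigD1 i) //= /upd eqxx.
rewrite (eq_bigr (fun j => x j)); last by move=> j /negbTE ->.
ring.
Qed.

Lemma foldr_max_le (R : realType) (s : seq R) (h v : R) :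
  (foldr Num.max h s <= v) = (h <= v) && all (fun x => x <= v) s.
Proof.
elim: s => [|x s IH] /=; first by rewrite andbT.
by rewrite ge_max IH andbCA.
Qed.

Lemma maxs_le (R : realType) (s : seq R) (v : R) : s != [::] ->
  (maxs s <= v) <-> (forall x, x \in s -> x <= v).
Proof.
case: s => [//|x0 s] _; rewrite /maxs foldr_max_le /=; split.
  by move=> /andP[_ /andP[h1 /allP h2]] x; rewrite inE => /orP[/eqP->|/h2].
move=> H; rewrite !H ?mem_head //=; apply/allP => x xs; apply: H.
by rewrite inE xs orbT.
Qed.

Lemma foldr_min_mem (R : realType) (s : seq R) (h : R) :
  foldr Num.min h s \in h :: s.
Proof.
elim: s => [|x s IH] /=; first by rewrite mem_head.
have [_|_] := lerP x (foldr Num.min h s).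
  by rewrite !inE eqxx orbT.
move: IH; rewrite !inE => /orP[->//|->]; by rewrite !orbT.
Qed.

Lemma foldr_min_le (R : realType) (s : seq R) (h : R) :
  forall x, x \in s -> foldr Num.min h s <= x.
Proof.
elim: s => [//|y s IH] x /=; rewrite inE => /orP[/eqP->|xs].
  by rewrite ge_min lexx.
by rewrite ge_min IH ?orbT.
Qed.

Lemma xbar_xstar (R : realType) (n : nat) (a : 'I_n -> R) (m : R) :
  (2 <= n)%N -> (forall i, 0 < a i < 1) ->
  xbar (x_star a m) = xbar_star a m.
Proof.
move=> n2 ha.
have N2 : 2 <= n%:R :> R by rewrite (ler_nat R 2 n).
set N := n%:R in N2 *.
have N0 : 0 < N by lra.
set S := \sum_(i < n) (N - a i)^-1.
have S1 : 1 < S.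
  have -> : 1 = \sum_(i < n) N^-1.
    by rewrite sumr_const card_ord -mulr_natl -/N mulfV // lt0r_neq0.
  apply: ltr_sum.
    rewrite has_predT /index_enum -enumT size_enum_ord; by case: n n2 {N2 N0 S ha a N}.
  move=> i _; have := ha i => /andP[a0 a1].
  rewrite ltf_pV2 ?posrE; lra.
set xb := xbar_star a m.
set D := m - xb.
have ex : forall i, x_star a m i = - (N - 1) - N * D + (N - 1) * N * (1 + D) * (N - a i)^-1.
  move=> i; have := ha i => /andP[a0 a1].
  rewrite /x_star -/xb -/D -/N; field; rewrite lt0r_neq0 //; lra.
rewrite /xbar (eq_bigr _ (fun i _ => ex i)) big_split /= sumr_const card_ord.
rewrite -big_distrr /= -/S -mulr_natl -/N.
have xbE : xb = 1 - N * m / (N - 1) * ((N * (1 - S^-1))^-1 - 1).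
  by rewrite /xb /xbar_star /alpha_hat -/N -/S.
rewrite /D xbE; field.
rewrite -/N !lt0r_neq0 //; lra.
Qed.

Lemma mins_le (R : realType) (s : seq R) (x : R) : x \in s -> mins s <= x.
Proof. by case: s => [//|x0 t] H; exact: foldr_min_le. Qed.

Lemma mins_mem (R : realType) (s : seq R) : s != [::] -> mins s \in s.
Proof.
case: s => [//|x0 t] _; change (foldr Num.min x0 (x0 :: t) \in x0 :: t).
have := @foldr_min_mem R (x0 :: t) x0; rewrite inE => /orP[/eqP->|//].
exact: mem_head.
Qed.

Theorem mainTheorem12 (R : realType) (n : nat) (a : 'I_n -> R) (m : R)
  (J : 'I_n -> R) :
  (2 <= n)%N ->
  (forall i, 0 < a i < 1) ->
  0 < m < 1 ->
  (* J_i is the (unique) zero of phi_i in the stated interval *)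
  (forall i, (n%:R * m - a i) / (n%:R - 1) <= J i
             <= n%:R * m / (n%:R - 1) - a i / (n%:R - a i)
           /\ phi n m (a i) (J i) = 0) ->
  curved_interior_pure_NE a m (x_star a m)
  <->
  (maxs [seq (n%:R - a i) * (n%:R * m / (n%:R - 1) - J i) - a i | i <- enum 'I_n]
     <= n%:R * (m - xbar_star a m)
   /\ n%:R * (m - xbar_star a m)
      < (n%:R - 1) * mins [seq a i | i <- enum 'I_n]
        / (1 - mins [seq a i | i <- enum 'I_n])).
Proof.
move=> n2 ha /andP[m0 m1] hJ.
have xbE := @xbar_xstar R n a m n2 ha.
have N2 : 2 <= n%:R :> R by rewrite (ler_nat R 2 n).
have i0 : 'I_n by exists 0%N; apply: leq_trans n2.
set N := n%:R in N2 hJ *.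
have N0 : 0 < N by lra.
set xs := x_star a m.
set xb := xbar_star a m in xbE *.
set D := m - xb.
set s := [seq (N - a i) * (N * m / (N - 1) - J i) - a i | i <- enum 'I_n].
set sa := [seq a i | i <- enum 'I_n].
have sne : s != [::].
  by rewrite -size_eq0 size_map size_enum_ord; case: n n2 {N2 hJ N N0 xs xb xbE D a J ha s sa i0}.
have xsE : forall i, xs i * (N - a i) = (N - 1) * a i - N * (1 - a i) * D.
  move=> i; have := ha i => /andP[a0 a1].
  by rewrite /xs /x_star -/xb -/N -/D divfK // lt0r_neq0 //; lra.
have payE : forall i y, payoff a m (upd xs i y) i =
    (y + Num.max (D - (y - xs i) / N) 0) `^ a i * (1 - y) `^ (1 - a i).
  move=> i y; rewrite /payoff /grade xbar_upd xbE /upd eqxx -/N.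
  by congr (_ `^ _ * _); congr (_ + Num.max _ _); rewrite /D; ring.
have payS : 0 < D -> forall i, payoff a m xs i = (xs i + D) `^ a i * (1 - xs i) `^ (1 - a i).
  move=> D0 i; rewrite /payoff /grade xbE -/D max_l //; exact: ltW.
have mu_in : exists j, mins sa = a j.
  have : mins sa \in sa.
    have : sa != [::].
      by rewrite -size_eq0 size_map size_enum_ord; case: n n2 {N2 hJ N N0 xs xb xbE D a J ha s sa i0 sne xsE payE payS}.
    exact: mins_mem.
  by move/mapP => [j _ ->]; exists j.
have mu_le : forall i, mins sa <= a i.
  move=> i; have H : a i \in sa by apply/mapP; exists i; rewrite ?mem_enum.
  exact: mins_le.
split.
- move=> [[prof NE] [pos curv]].
  have D0 : 0 < D by rewrite /D -xbE; lra.
  split.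
    apply/maxs_le => // v /mapP [i _ ->].
    have := hJ i => [[/andP[Jlo Jhi] phJ]].
    have := @player R n m (a i) D (xs i) (J i) n2 (ha i) m0 D0 (xsE i).
    rewrite Jlo Jhi => /(_ isT phJ) [H _]; apply: H => y y01.
    by rewrite -payE -payS //; apply: NE.
  have [j ->] := mu_in.
  have := ha j => /andP[a0 a1].
  rewrite ltr_pdivlMr; last lra.
  have := pos j; have := xsE j => e p.
  have : 0 < xs j * (N - a j) by apply: mulr_gt0 => //; lra.
  rewrite e; lra.
- move=> [Hmax Hmin].
  have Hterm : forall i, (N - a i) * (N * m / (N - 1) - J i) - a i <= N * D.
    move=> i; move/maxs_le: Hmax => /(_ sne); apply.
    exact: (map_f (fun i => (N - a i) * (N * m / (N - 1) - J i) - a i) (mem_enum 'I_n i)).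
  have D0 : 0 < D.
    have := hJ i0 => [[/andP[_ Jhi] phJ]].
    have := @term_pos R n m (a i0) (J i0) n2 (ha i0) Jhi phJ; rewrite -/N.
    have := Hterm i0; nra.
  have mu0 : 0 < mins sa < 1 by have [j ->] := mu_in; exact: ha.
  move: mu0 => /andP[u0 u1].
  move: Hmin; rewrite ltr_pdivlMr; last lra.
  move=> Hmin.
  have pos : forall i, 0 < xs i.
    move=> i; have := ha i => /andP[a0 a1].
    have := xsE i; have := mu_le i => mi e.
    have : 0 < xs i * (N - a i).
      rewrite e.
      have : N * D * (1 - a i) <= N * D * (1 - mins sa).
        by rewrite ler_pM2l ?mulr_gt0 //; lra.
      have : (N - 1) * mins sa <= (N - 1) * a i by rewrite ler_pM2l //; lra.
      lra.
    by rewrite pmulr_lgt0 //; lra.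
  have le1 : forall i, xs i <= 1.
    move=> i; have := ha i => /andP[a0 a1].
    have := xsE i => e.
    have : xs i * (N - a i) <= 1 * (N - a i).
      rewrite e mul1r.
      have : 0 <= N * (1 - a i) * D by rewrite mulr_ge0 // ?mulr_ge0; lra.
      nra.
    by rewrite ler_pM2r; lra.
  split; last by split => //; rewrite xbE; rewrite /D in D0; lra.
  split.
    by move=> i; rewrite (ltW (pos i)) le1.
  move=> i y y01.
  have := hJ i => [[/andP[Jlo Jhi] phJ]].
  have := @player R n m (a i) D (xs i) (J i) n2 (ha i) m0 D0 (xsE i).
  rewrite Jlo Jhi => /(_ isT phJ) [_ H].
  rewrite payE payS //; apply: H => //; exact: Hterm.
Qed.
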